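(* Let $A$ be a T-brace. Then the additive group of $\zeta_n(\star,A)/\zeta(\star,A)$ is periodic for all natural numbers $n$.
   Context: A (left) brace is a set $A$ with two operations $+$ and $\cdot$ such that $(A,+)$ is an abelian group, $(A,\cdot)$ is a group, and $a(b+c)=ab+ac-a$ for all $a,b,c\in A$. Put $a\star b=ab-a-b$. A subbrace is a subset which is a subgroup of both $(A,+)$ and $(A,\cdot)$; a subbrace $L$ is an ideal if $a\star z, z\star a\in L$ for all $a\in A$, $z\in L$, and then the quotient brace $A/L$ is defined. $A$ is a T-brace if whenever $I$ is an ideal of $J$ and $J$ is an ideal of $A$, then $I$ is an ideal of $A$. The $\star$-center is $\zeta(\star,A)=\{a: a\star x=x\star a=0\ \forall x\}$; the upper $\star$-central series is $\zeta_0(\star,A)=0$, $\zeta_{n+1}(\star,A)/\zeta_n(\star,A)=\zeta(\star,A/\zeta_n(\star,A))$, each term an ideal of $A$. *)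

(* Defs.v *)
From HB Require Import structures.
From mathcomp Require Import all_boot all_algebra.
Set Implicit Arguments. Unset Strict Implicit. Unset Printing Implicit Defensive.
Import GRing.Theory.
Local Open Scope ring_scope.

Section Brace.
Variables (A : zmodType) (mul : A -> A -> A) (one : A) (inv : A -> A).

Definition is_brace : Prop :=
  [/\ (forall a b c, mul a (mul b c) = mul (mul a b) c),
      (forall a, mul one a = a /\ mul a one = a),
      (forall a, mul (inv a) a = one /\ mul a (inv a) = one)
    & (forall a b c, mul a (b + c) = mul a b + mul a c - a)].

Definition star (a b : A) : A := mul a b - a - b.

Definition is_subbrace (L : A -> Prop) : Prop :=
  [/\ L 0, (forall x y, L x -> L y -> L (x - y)),
      L one, (forall x y, L x -> L y -> L (mul x y))
    & (forall x, L x -> L (inv x))].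

Definition is_ideal_of (J L : A -> Prop) : Prop :=
  [/\ (forall z, L z -> J z), is_subbrace L
    & (forall a z, J a -> L z -> L (star a z) /\ L (star z a))].

Definition is_ideal (L : A -> Prop) : Prop := is_ideal_of (fun _ => True) L.

Definition is_Tbrace : Prop :=
  forall I J : A -> Prop, is_ideal J -> is_ideal_of J I -> is_ideal I.

(* Preimage in A of the star-center of A/L: a + L is star-central in A/L
   iff a*x and x*a lie in L for all x (since (a+L)*(x+L) = a*x + L). *)
Definition star_center_mod (L : A -> Prop) : A -> Prop :=
  fun a => forall x, L (star a x) /\ L (star x a).

Fixpoint zeta (n : nat) : A -> Prop :=
  match n with
  | O => fun a => a = 0
  | S m => star_center_mod (zeta m)
  end.
End Brace.

(* Main.v *)
Require Import Defs.
From HB Require Import structures.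
From mathcomp Require Import all_boot all_algebra zify.
From Stdlib Require Import Classical.
Set Implicit Arguments. Unset Strict Implicit. Unset Printing Implicit Defensive.
Import GRing.Theory.
Local Open Scope ring_scope.

Lemma arith (n1 n : int) : n1 * (`|n1|.+1)%:Z = ((`|n1|.+1 * `|n1|.+1)%N)%:Z * n -> n1 = 0.
Proof.
move=> H.
have E : n1 = (`|n1|.+1)%:Z * n.
  apply: (mulIf (x := (`|n1|.+1)%:Z)) => //.
  by rewrite H PoszM mulrAC.
clear H.
case: (eqVneq n 0) => [n0|nz]; first by rewrite n0 mulr0 in E.
exfalso. move: E nz. nia.
Qed.

Section Basic.
Variables (A : zmodType) (mul : A -> A -> A) (one : A) (inv : A -> A).
Hypothesis hb : is_brace mul one inv.
Local Notation st := (star mul).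

Definition lam a y := mul a y - a.

Lemma mulA' a b c : mul a (mul b c) = mul (mul a b) c.
Proof. by case: hb. Qed.
Lemma mul1x a : mul one a = a. Proof. by case: hb => _ H _ _; case: (H a). Qed.
Lemma mulxV a : mul a (inv a) = one. Proof. by case: hb => _ _ H _; case: (H a). Qed.
Lemma mulD a b c : mul a (b + c) = mul a b + mul a c - a. Proof. by case: hb. Qed.

Lemma mulx0 a : mul a 0 = a.
Proof.
have H := mulD a 0 0; rewrite addr0 -addrA in H.
rewrite -{1}(addr0 (mul a 0)) in H.
by move/addrI: H => /esym/eqP; rewrite subr_eq0 => /eqP.
Qed.

Lemma one0 : one = 0.
Proof. by rewrite -{1}(mulx0 one) mul1x. Qed.

Lemma mul0x a : mul 0 a = a. Proof. by rewrite -one0 mul1x. Qed.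

Lemma lamD a y z : lam a (y + z) = lam a y + lam a z.
Proof. by rewrite /lam mulD addrACA addrA. Qed.
Lemma lam0 a : lam a 0 = 0.
Proof. by rewrite /lam mulx0 subrr. Qed.
Lemma lamN a y : lam a (- y) = - lam a y.
Proof. by apply/eqP; rewrite -subr_eq0 opprK -lamD addNr lam0. Qed.
Lemma lamB a y z : lam a (y - z) = lam a y - lam a z.
Proof. by rewrite lamD lamN. Qed.
Lemma lamM a b x : lam (mul a b) x = lam a (lam b x).
Proof.
have E : mul b x = lam b x + b by rewrite /lam subrK.
rewrite [LHS]/lam -mulA' [in LHS]E mulD addrAC addrK.
by [].
Qed.

Lemma stE a b : st a b = lam a b - b.
Proof. by rewrite /star /lam. Qed.
Lemma mulE a b : mul a b = st a b + a + b.
Proof. by rewrite /star addrAC !subrK. Qed.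

Lemma stD a y z : st a (y + z) = st a y + st a z.
Proof. by rewrite !stE lamD opprD addrACA. Qed.
Lemma st0r a : st a 0 = 0.
Proof. by rewrite stE lam0 subr0. Qed.
Lemma st0l a : st 0 a = 0.
Proof. by rewrite /star mul0x subr0 subrr. Qed.
Lemma stN a y : st a (- y) = - st a y.
Proof. by apply/eqP; rewrite -subr_eq0 opprK -stD addNr st0r. Qed.
Lemma stB a y z : st a (y - z) = st a y - st a z.
Proof. by rewrite stD stN. Qed.
Lemma stMn a y n : st a (y *+ n) = st a y *+ n.
Proof. elim: n => [|n IH]; first by rewrite !mulr0n st0r. by rewrite !mulrS stD IH. Qed.
Lemma stMz a y k : st a (y *~ k) = st a y *~ k.
Proof. case: k => n /=; first by rewrite stMn. by rewrite stN stMn. Qed.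

Lemma stM a b x : st (mul a b) x = st a (st b x) + st a x + st b x.
Proof.
rewrite !stE lamM (lamB a (lam b x) x).
set p := lam a (lam b x); set q := lam a x; set r := lam b x.
clearbody p q r.
by rewrite addrAC subrK addrA subrK.
Qed.

Lemma invE y : inv y = - y - st y (inv y).
Proof.
have H := mulxV y; rewrite one0 mulE in H.
apply: (addrI (st y (inv y) + y)); rewrite H.
by rewrite [st y (inv y) + y]addrC -opprD subrr.
Qed.
Section Ideal.
Variable L : A -> Prop.
Hypothesis hL : is_ideal mul one inv L.

Lemma L0 : L 0. Proof. by case: hL => _ [H _ _ _ _] _. Qed.
Lemma LB x y : L x -> L y -> L (x - y). Proof. by case: hL => _ [_ H _ _ _] _; apply: H. Qed.
Lemma LN x : L x -> L (- x). Proof. by move=> Hx; rewrite -sub0r; apply: LB => //; apply: L0. Qed.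
Lemma LD x y : L x -> L y -> L (x + y).
Proof. by move=> Hx Hy; rewrite -[y]opprK; apply: LB => //; apply: LN. Qed.
Lemma LMn x n : L x -> L (x *+ n).
Proof. move=> Hx; elim: n => [|n IH]; first by rewrite mulr0n; apply: L0. by rewrite mulrS; apply: LD. Qed.
Lemma LMz x k : L x -> L (x *~ k).
Proof. move=> Hx; case: k => n /=; first exact: LMn. by apply: LN; apply: LMn. Qed.
Lemma Lstr a z : L z -> L (st a z). Proof. by move=> Hz; case: hL => _ _ H; case: (H a z I Hz). Qed.
Lemma Lstl a z : L z -> L (st z a). Proof. by move=> Hz; case: hL => _ _ H; case: (H a z I Hz). Qed.
Lemma Leq x y : x = y -> L y -> L x. Proof. by move=> ->. Qed.

Lemma lamE a y : lam a y = st a y + y.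
Proof. by rewrite stE subrK. Qed.

Lemma stL u l x : L l -> L (st (u + l) x - st u x).
Proof.
move=> Hl.
set l' := st (inv u) l + l.
have Hl' : L l' by apply: LD => //; apply: Lstr.
have E : mul u l' = u + l.
  have -> : mul u l' = lam u l' + u by rewrite /lam subrK.
  rewrite /l' -lamE -lamM // mulxV // one0 /lam mul0x // subr0.
  by rewrite addrC.
rewrite -E stM // addrAC addrK.
by apply: LD; [apply: Lstr; apply: Lstl|apply: Lstl].
Qed.

Lemma stR u y y' : L (y - y') -> L (st u y - st u y').
Proof. by move=> H; rewrite -stB //; apply: Lstr. Qed.

Lemma stLe y y' x : L (y - y') -> L (st y x - st y' x).
Proof. by move=> H; have := stL y' x H; rewrite (addrC y') subrK. Qed.

Definition scm := star_center_mod mul L.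

Lemma L_scm z : L z -> scm z.
Proof. by move=> Hz x; split; [apply: Lstl|apply: Lstr]. Qed.

Lemma scmD u v : scm u -> scm v -> scm (u + v).
Proof.
move=> Hu Hv x; split; last first.
  by rewrite stD //; apply: LD; [case: (Hu x)|case: (Hv x)].
have E : u + v = mul u v + (- st u v) by rewrite mulE addrAC (addrAC (st u v)) subrr add0r.
have H1 := stL (mul u v) x (LN (proj1 (Hu v))).
rewrite E; apply: (Leq (y := (st (mul u v + - st u v) x - st (mul u v) x) + st (mul u v) x)).
  by rewrite subrK.
apply: LD => //; rewrite stM //.
apply: LD; last by case: (Hv x).
by apply: LD; [case: (Hu (st v x))|case: (Hu x)].
Qed.

Lemma scmN u : scm u -> scm (- u).
Proof.
move=> Hu x; split; last first.
  by rewrite stN //; apply: LN; case: (Hu x).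
have E : mul u (- u) + (- st u (- u)) = 0 by rewrite mulE addrAC (addrAC (st u (- u))) subrr add0r subrr.
have H1 := stL (mul u (- u)) x (LN (proj1 (Hu (- u)))).
rewrite E st0l // sub0r in H1.
move/LN: H1; rewrite opprK stM // => H2.
set p := st u (st (- u) x); set q := st u x; set r := st (- u) x.
apply: (Leq (y := p + q + r - (p + q))).
  by rewrite [_ - (p + q)]addrC addKr.
apply: LB => //; apply: LD; first by case: (Hu (st (- u) x)).
by case: (Hu x).
Qed.

Lemma scm0 : scm 0.
Proof. by move=> x; rewrite st0l st0r; split; apply: L0. Qed.

Lemma scmB u v : scm u -> scm v -> scm (u - v).
Proof. by move=> Hu Hv; apply: scmD => //; apply: scmN. Qed.

Lemma scm_ideal : is_ideal mul one inv scm.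
Proof.
split=> //.
  split.
  - exact: scm0.
  - exact: scmB.
  - by rewrite one0; apply: scm0.
  - move=> u v Hu Hv; rewrite mulE.
    by apply: scmD => //; apply: scmD => //; apply: L_scm; case: (Hu v).
  - move=> u Hu; rewrite invE.
    by apply: scmB; [apply: scmN|apply: L_scm; case: (Hu (inv u))].
move=> a z _ Hz; split; apply: L_scm; by case: (Hz a).
Qed.

Definition eqm x y := L (x - y).
Lemma eqm_refl x : eqm x x. Proof. by rewrite /eqm subrr; apply: L0. Qed.
Lemma eqm_eq x y : x = y -> eqm x y. Proof. by move=> ->; apply: eqm_refl. Qed.
Lemma eqm_sym x y : eqm x y -> eqm y x.
Proof. by rewrite /eqm => /LN; rewrite opprB. Qed.
Lemma eqm_trans y x z : eqm x y -> eqm y z -> eqm x z.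
Proof. by rewrite /eqm => H1 H2; have := LD H1 H2; rewrite addrA subrK. Qed.
Lemma eqm_add x x' y y' : eqm x x' -> eqm y y' -> eqm (x + y) (x' + y').
Proof. by rewrite /eqm => H1 H2; have := LD H1 H2; rewrite opprD addrACA. Qed.
Lemma eqm_opp x x' : eqm x x' -> eqm (- x) (- x').
Proof. by rewrite /eqm => /LN; rewrite opprD. Qed.
Lemma eqm_sub x x' y y' : eqm x x' -> eqm y y' -> eqm (x - y) (x' - y').
Proof. by move=> H1 H2; apply: eqm_add => //; apply: eqm_opp. Qed.
Lemma eqm_mulz x x' k : eqm x x' -> eqm (x *~ k) (x' *~ k).
Proof. by rewrite /eqm => /(LMz k); rewrite mulrzBl. Qed.
Lemma eqm_muln x x' k : eqm x x' -> eqm (x *+ k) (x' *+ k).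
Proof. by rewrite /eqm => /(LMn k); rewrite mulrnBl. Qed.
Lemma eqm0 x : eqm x 0 -> L x. Proof. by rewrite /eqm subr0. Qed.
Lemma eqmL x : L x -> eqm x 0. Proof. by rewrite /eqm subr0. Qed.
Lemma eqm_stl x x' y : eqm x x' -> eqm (st x y) (st x' y).
Proof. exact: stLe. Qed.
Lemma eqm_str x y y' : eqm y y' -> eqm (st x y) (st x y').
Proof. exact: stR. Qed.
Lemma eqm_scm x y : eqm x y -> scm y -> scm x.
Proof. by rewrite /eqm => H Hy; rewrite -(subrK y x); apply: scmD => //; apply: L_scm. Qed.
End Ideal.

Section Main.
Variable L : A -> Prop.
Hypothesis hL : is_ideal mul one inv L.
Local Notation Z1 := (scm L).
Local Notation Z2 := (scm (scm L)).
Let hZ1 := scm_ideal hL.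
Let hZ2 := scm_ideal hZ1.
Local Notation "x === y" := (eqm L x y) (at level 70).

Lemma Q3 y z x : Z1 z -> st (y + z) x === st y x.
Proof.
move=> Hz.
have E : y + z = mul y z + (- st y z) by rewrite mulE addrAC (addrAC (st y z)) subrr add0r.
rewrite E.
apply: (eqm_trans hL (y := st (mul y z) x)).
  exact: (stL hL (mul y z) x (LN hL (proj2 (Hz y)))).
rewrite stM.
apply: (eqm_trans hL (y := 0 + st y x + 0)); last by apply: (eqm_eq hL); rewrite add0r addr0.
apply: (eqm_add hL); [apply: (eqm_add hL)|].
- by apply: eqmL; apply: (Lstr hL); case: (Hz x).
- exact: (eqm_refl hL).
- by apply: eqmL; case: (Hz x).
Qed.

Lemma Q3' y z x : Z1 z -> st (y - z) x === st y x.
Proof. by move=> Hz; have := Q3 (y - z) x Hz; rewrite subrK => H; apply: (eqm_sym hL). Qed.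

Lemma Q4 u y x : Z2 y -> st (u + y) x === st u x + st y x.
Proof.
move=> Hy.
have E : u + y = mul u y - st u y by rewrite mulE addrAC (addrAC (st u y)) subrr add0r.
rewrite E.
apply: (eqm_trans hL (y := st (mul u y) x)); first by apply: Q3'; case: (Hy u).
rewrite stM.
apply: (eqm_trans hL (y := 0 + st u x + st y x)); last by apply: (eqm_eq hL); rewrite add0r.
apply: (eqm_add hL); [apply: (eqm_add hL)|].
- by apply: eqmL; case: (Hy x) => H _; case: (H u).
- exact: (eqm_refl hL).
- exact: (eqm_refl hL).
Qed.

Lemma Q2n b n x : Z2 b -> st (b *+ n) x === st b x *+ n.
Proof.
move=> Hb; elim: n => [|n IH]; first by rewrite !mulr0n st0l; apply: (eqm_refl hL).
rewrite !mulrSr.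
apply: (eqm_trans hL (y := st (b *+ n) x + st b x)); first exact: Q4.
by apply: (eqm_add hL) => //; apply: (eqm_refl hL).
Qed.

Lemma Q2z b k x : Z2 b -> st (b *~ k) x === st b x *~ k.
Proof.
move=> Hb; case: k => n; first exact: Q2n.
rewrite /intmul.
set w := b *+ n.+1.
have Hw : Z2 w by apply: (LMn hZ2).
have H1 := Q4 (- w) x Hw.
rewrite addNr st0l in H1.
apply: (eqm_trans hL (y := (st (- w) x + st w x) - st w x)).
  by apply: (eqm_eq hL); rewrite addrK.
apply: (eqm_trans hL (y := 0 - st b x *+ n.+1)); last by apply: (eqm_eq hL); rewrite sub0r.
apply: (eqm_sub hL); first exact: (eqm_sym hL).
exact: Q2n.
Qed.


Lemma ACsub (p q p' q' : A) : (p + q) - (p' + q') = (p - p') + (q - q').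
Proof. by rewrite opprD addrACA. Qed.

Section Cons.
Variable b : A.
Hypothesis Hb : Z2 b.
Let c := st b b.
Let Hc : Z1 c := proj1 (Hb b).

Definition Jb y := exists k z, Z1 z /\ y = b *~ k + z.
Definition Ib y := exists m n, y === b *~ m + c *~ n.

Lemma J_Z2 y : Jb y -> Z2 y.
Proof.
case=> k [z [Hz ->]]; apply: (scmD hZ1); first by apply: (LMz hZ2).
exact: (L_scm hZ1).
Qed.

Lemma J_st k z w : Z1 z -> st (b *~ k + z) w === st b w *~ k.
Proof.
move=> Hz; apply: (eqm_trans hL (y := st (b *~ k) w)); first exact: Q3.
exact: Q2z.
Qed.

Lemma stb_eq y m : Z1 (y - b *~ m) -> st b y === c *~ m.
Proof.
move=> H; rewrite /eqm /c -stMz -stB.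
by case: (H b).
Qed.

Lemma I_Z1 y m n : y === b *~ m + c *~ n -> Z1 (y - b *~ m).
Proof.
move=> H; apply: (eqm_scm hL (y := c *~ n)); last by apply: (LMz hZ1).
apply: (eqm_trans hL (y := b *~ m + c *~ n - b *~ m)).
  by apply: (eqm_sub hL) => //; apply: (eqm_refl hL).
by apply: (eqm_eq hL); rewrite addrC addKr.
Qed.

Lemma J_ideal : is_ideal mul one inv Jb.
Proof.
split=> //.
  split.
  - by exists 0, 0; split; [apply: (scm0 hL)| rewrite mulr0z addr0].
  - move=> y y' [k [z [Hz ->]]] [k' [z' [Hz' ->]]].
    exists (k - k'), (z - z'); split; first exact: (scmB hL).
    by rewrite mulrzBr ACsub.
  - by rewrite one0; exists 0, 0; split; [apply: (scm0 hL)| rewrite mulr0z addr0].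
  - move=> y y' Hy Hy'.
    have Z2y := J_Z2 Hy.
    case: Hy => k [z [Hz Ey]]; case: Hy' => k' [z' [Hz' Ey']].
    exists (k + k'), (st y y' + (z + z')); split.
      apply: (scmD hL); first by case: (Z2y y').
      exact: (scmD hL).
    rewrite [mul y y']mulE; set s := st y y'.
    by clearbody s; rewrite {1}Ey {1}Ey' mulrzDr -addrA addrACA addrCA.
  - move=> y Hy.
    have Z2y := J_Z2 Hy.
    case: Hy => k [z [Hz Ey]].
    exists (- k), (- z - st y (inv y)); split.
      apply: (scmB hL); first exact: (scmN hL).
      by case: (Z2y (inv y)).
    set s := st y (inv y); rewrite {1}invE -/s.
    by clearbody s; rewrite {1}Ey opprD -addrA mulrNz.
move=> a y _ Hy; have Z2y := J_Z2 Hy; split.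
  by exists 0, (st a y); split; [case: (Z2y a)| rewrite mulr0z add0r].
by exists 0, (st y a); split; [case: (Z2y a)| rewrite mulr0z add0r].
Qed.

Lemma I_J y : Ib y -> Jb y.
Proof.
case=> m [n H]; exists m, (y - b *~ m); split; first exact: (I_Z1 H).
by rewrite addrC subrK.
Qed.

Lemma I_ideal : is_ideal_of mul one inv Jb Ib.
Proof.
split; first exact: I_J.
  split.
  - by exists 0, 0; apply: (eqm_eq hL); rewrite !mulr0z addr0.
  - move=> y y' [m [n H]] [m' [n' H']]; exists (m - m'), (n - n').
    apply: (eqm_trans hL (eqm_sub hL H H')).
    by apply: (eqm_eq hL); rewrite !mulrzBr ACsub.
  - by rewrite one0; exists 0, 0; apply: (eqm_eq hL); rewrite !mulr0z addr0.
  - move=> y y' [m [n H]] [m' [n' H']].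
    exists (m + m'), (m' * m + (n + n')).
    rewrite [mul y y']mulE.
    apply: (eqm_trans hL (y := c *~ (m' * m) + (b *~ m + c *~ n) + (b *~ m' + c *~ n'))).
      apply: (eqm_add hL) => //; apply: (eqm_add hL) => //.
      have Ey : y = b *~ m + (y - b *~ m) by rewrite addrC subrK.
      rewrite {1}Ey.
      apply: (eqm_trans hL (y := st b y' *~ m)); first by apply: J_st; exact: (I_Z1 H).
      rewrite mulrzA; apply: (eqm_mulz hL).
      exact: (stb_eq (I_Z1 H')).
    by apply: (eqm_eq hL); rewrite !mulrzDr -addrA addrACA addrCA.
  - move=> y [m [n H]]; exists (- m), (m * m - n).
    have Z2y : Z2 y by apply: J_Z2; apply: I_J; exists m, n.
    set w := inv y.
    have Ew : w = - y - st y w by rewrite /w; exact: invE.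
    have Hs : st y w === - (c *~ (m * m)).
      have Ey : y = b *~ m + (y - b *~ m) by rewrite addrC subrK.
      apply: (eqm_trans hL (y := st b w *~ m)).
        by rewrite {1}Ey; apply: J_st; exact: (I_Z1 H).
      rewrite mulrzA -mulNrz; apply: (eqm_mulz hL).
      rewrite Ew stB stN.
      apply: (eqm_trans hL (y := - (c *~ m) - 0)); last by apply: (eqm_eq hL); rewrite subr0.
      apply: (eqm_sub hL); first by apply: (eqm_opp hL); exact: (stb_eq (I_Z1 H)).
      by apply: eqmL; case: (Z2y w) => H1 _; case: (H1 b).
    rewrite Ew.
    apply: (eqm_trans hL (y := - (b *~ m + c *~ n) - - (c *~ (m * m)))).
      by apply: (eqm_sub hL) => //; apply: (eqm_opp hL).
    by apply: (eqm_eq hL); rewrite opprK mulrNz mulrzBr opprD -addrA (addrC (- (c *~ n))).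
move=> a y Ha [m [n H]]; case: Ha => k [z [Hz Ea]]; split.
  exists 0, (m * k); rewrite Ea.
  apply: (eqm_trans hL (y := st b y *~ k)); first exact: J_st.
  apply: (eqm_trans hL (y := (c *~ m) *~ k)).
    by apply: (eqm_mulz hL); exact: (stb_eq (I_Z1 H)).
  by apply: (eqm_eq hL); rewrite mulr0z add0r mulrzA.
exists 0, (k * m).
have Ey : y = b *~ m + (y - b *~ m) by rewrite addrC subrK.
rewrite {1}Ey.
apply: (eqm_trans hL (y := st b a *~ m)); first by apply: J_st; exact: (I_Z1 H).
apply: (eqm_trans hL (y := (c *~ k) *~ m)).
  apply: (eqm_mulz hL); apply: stb_eq.
  by rewrite Ea addrC addKr.
by apply: (eqm_eq hL); rewrite mulr0z add0r mulrzA.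
Qed.

Lemma Tb (hT : is_Tbrace mul one inv) x : Ib (st x b) /\ Ib (st b x).
Proof.
have := hT Ib Jb J_ideal I_ideal; case=> _ _ H; apply: H => //.
by exists 1, 0; apply: (eqm_eq hL); rewrite mulr1z mulr0z addr0.
Qed.

End Cons.
Lemma key t (e d : A) m n : Z1 t -> Z1 d -> t === e *~ m + d *~ n -> Z1 (e *~ m).
Proof.
move=> Zt Zd H.
have Z : Z1 (e *~ m + d *~ n) by apply: (eqm_scm hL (eqm_sym hL H)).
rewrite -(addrK (d *~ n) (e *~ m)); apply: (scmB hL) => //.
exact: (LMz hZ1).
Qed.

Lemma main_step (hT : is_Tbrace mul one inv) a : Z2 a -> exists k, (0 < k)%N /\ Z1 (a *+ k).
Proof.
move=> Ha.
case: (classic (exists k, (0 < k)%N /\ Z1 (a *+ k))) => // H; exfalso.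
have N : forall m : int, Z1 (a *~ m) -> m = 0.
  case=> n Hn.
  - case: n Hn => [//|n] Hn; exfalso; apply: H; exists n.+1; split => //.
  - exfalso; apply: H; exists n.+1; split=> //.
    by move/(LN hZ1): Hn; rewrite NegzE mulrNz opprK -pmulrn.
set c := st a a.
have Hc : Z1 c := proj1 (Ha a).
have Hbb : forall k, st (a *+ k) (a *+ k) === c *+ (k * k).
  move=> k; rewrite stMn mulrnA; apply: (eqm_muln hL); exact: Q2n.
case: (classic (exists r, (0 < r)%N /\ L (c *+ r))) => [[r [r0 Hr]]|Hinf].
  have Hb : Z2 (a *+ r) by apply: (LMn hZ2).
  have Lbb : L (st (a *+ r) (a *+ r)).
    apply: eqm0; apply: (eqm_trans hL (Hbb r)).
    by rewrite mulnn expnS mulnC mulrnA /=; apply: eqmL; apply: (LMn hL).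
  have side : forall t, Z1 t -> Ib (a *+ r) t -> L t.
    move=> t Zt [m [n Ht]].
    have Zm := key Zt (L_scm hL Lbb) Ht.
    rewrite pmulrn -mulrzA in Zm.
    have /eqP := N _ Zm; rewrite mulf_eq0 => /orP [|/eqP m0].
      by move/eqP=> [] r00; rewrite r00 in r0.
    rewrite m0 mulr0z add0r in Ht.
    by apply: eqm0; apply: (eqm_trans hL Ht); apply: eqmL; apply: (LMz hL).
  apply: H; exists r; split => // x.
  case: (Tb Hb hT x) => H1 H2; split; apply: side => //; by case: (Hb x).
have Nc : forall j : int, L (c *~ j) -> j = 0.
  case=> n Hn.
  - case: n Hn => [//|n] Hn; exfalso; apply: Hinf; exists n.+1; split => //.
  - exfalso; apply: Hinf; exists n.+1; split=> //.
    by move/(LN hL): Hn; rewrite NegzE mulrNz opprK -pmulrn.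
have side : forall t, Z1 t ->
   (forall k, (0 < k)%N -> exists m n, t *+ k === (a *+ k) *~ m + (c *+ (k * k)) *~ n) -> L t.
  move=> t Zt Hk.
  case: (Hk 1%N isT) => m1 [n1 H1].
  rewrite !mulr1n in H1.
  have m10 := N _ (key Zt Hc H1).
  rewrite m10 mulr0z add0r in H1.
  case: (Hk (`|n1|.+1)%N isT) => m [n HK].
  have ZK : Z1 (t *+ (`|n1|.+1)) by apply: (LMn hZ1).
  have Zd : Z1 (c *+ (`|n1|.+1 * `|n1|.+1)) by apply: (LMn hZ1).
  have Zm := key ZK Zd HK.
  rewrite pmulrn -mulrzA in Zm.
  have /eqP := N _ Zm; rewrite mulf_eq0 => /orP [//|/eqP m0].
  rewrite m0 mulr0z add0r [c *+ _]pmulrn -mulrzA in HK.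
  have H2 : t *+ (`|n1|.+1) === c *~ (n1 * (`|n1|.+1)%:Z).
    by rewrite mulrzA -pmulrn; apply: (eqm_muln hL).
  have H3 := eqm_trans hL (eqm_sym hL H2) HK.
  rewrite /eqm -mulrzBr in H3.
  have /eqP := Nc _ H3; rewrite subr_eq0 => /eqP /arith n10.
  by rewrite n10 mulr0z in H1; apply: eqm0.
apply: H; exists 1%N; split => // x; rewrite mulr1n; split.
  apply: side; first by case: (Ha x).
  move=> k k0; case: (Tb (LMn hZ2 k Ha) hT x) => _ [m [n Hmn]]; exists m, n.
  apply: (eqm_trans hL (y := st (a *+ k) x)); first by apply: (eqm_sym hL); apply: Q2n.
  apply: (eqm_trans hL Hmn); apply: (eqm_add hL); first exact: (eqm_refl hL).
  by apply: (eqm_mulz hL); apply: Hbb.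
apply: side; first by case: (Ha x).
move=> k k0; case: (Tb (LMn hZ2 k Ha) hT x) => [[m [n Hmn]] _]; exists m, n.
rewrite -stMn.
apply: (eqm_trans hL Hmn); apply: (eqm_add hL); first exact: (eqm_refl hL).
by apply: (eqm_mulz hL); apply: Hbb.
Qed.

End Main.

Lemma zeta_ideal n : is_ideal mul one inv (zeta mul n).
Proof.
elim: n => [|n IH]; last exact: (scm_ideal IH).
have inv0 : inv 0 = 0 by rewrite -[inv 0]mul0x mulxV one0.
split=> //.
  split=> //=.
  - by move=> x y -> ->; rewrite subr0.
  - by rewrite one0.
  - by move=> x y -> ->; rewrite mul0x.
  - by move=> x ->.
by move=> a z _ /= ->; rewrite st0l st0r.
Qed.

Lemma aux (hT : is_Tbrace mul one inv) n : forall a, zeta mul n.+1 a ->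
  exists k : nat, (0 < k)%N /\ zeta mul 1 (a *+ k).
Proof.
elim: n => [|n IH] a Ha; first by exists 1%N; rewrite mulr1n.
case: (main_step (zeta_ideal n) hT Ha) => k [k0 Hk].
case: (IH _ Hk) => k' [k'0 Hk'].
exists (k * k')%N; split; first by rewrite muln_gt0 k0.
by rewrite mulrnA.
Qed.

End Basic.

Unset Implicit Arguments.
Set Strict Implicit.

Theorem proposition4p2 (A : zmodType) (mul : A -> A -> A) (one : A)
    (inv : A -> A) :
  is_brace mul one inv -> is_Tbrace mul one inv ->
  forall (n : nat) (a : A), zeta mul n a ->
    exists k : nat, (0 < k)%N /\ zeta mul 1 (a *+ k).
Proof.
move=> hb hT [|n] a Ha; last exact: (aux hb hT Ha).
exists 1%N; split => //; rewrite /= in Ha; rewrite Ha mul0rn => x.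
by rewrite /= (st0l hb) (st0r hb).
Qed.
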